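(* Let $M$ be an ordinal monoid with merge and $A\subseteq M$. Then at least one of the following holds: (1) $a\cdot\mathrm{Cl}^{\mathrm{ord}+}_{\sharp}(A)\subsetneq\mathrm{Cl}^{\mathrm{ord}+}_{\sharp}(A)$ for some $a\in A$; (2) $\mathrm{Cl}^{\mathrm{ord}+}_{\sharp}(\mathrm{Cl}^{\omega}_{\sharp}(A))\subsetneq\mathrm{Cl}^{\mathrm{ord}+}_{\sharp}(A)$; (3) $x\cdot y=y$ and $x^\omega=y^\omega$ for all $x,y\in\mathrm{Cl}^{\mathrm{ord}+}_{\sharp}(A)$.
   Context: An ordinal monoid has generalised product $\pi$ on countable-ordinal-length words; $1=\pi(\varepsilon)$, $x\cdot y=\pi(xy)$, $x^\omega=\pi(xxx\cdots)$; ordered by $\le$ if $u\le v$ letterwise implies $\pi(u)\le\pi(v)$. $x^!$ idempotent power, $x^{!+k}$ eventual value of $x^{n!+k}$ in a finite semigroup. Ordinal monoid with merge: $(M,1,\le,\cdot,-^\omega,-^\sharp)$, $M$ finite, $(M,1,\le,\cdot,-^\omega)$ the presentation of an ordered finite ordinal monoid, $-^\sharp$ monotone with $a^{!+k}\le a^\sharp$, $(a^!)^\sharp=a^!$, $a^\sharp a^\sharp=(a^\sharp)^\sharp=a^\sharp$, $(ab)^\sharp=a(ba)^\sharp b$ for all $a,b\in M$, $k\in\mathbb Z$. Closures of $A\subseteq M$: $\mathrm{Cl}^{+}_{\sharp}(A)$ closure under $\cdot$ and $-^\sharp$; $\mathrm{Cl}^{\mathrm{ord}+}_{\sharp}(A)$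 closure under $\cdot$, $-^\sharp$ and $-^\omega$; $\mathrm{Cl}^{\omega}_{\sharp}(A)=\{a\cdot b^\omega:a,b\in\mathrm{Cl}^{+}_{\sharp}(A)\}$. $a\cdot X=\{a\cdot x: x\in X\}$. *)

(* Defs.v *)
From mathcomp Require Import all_boot all_order all_algebra.
Set Implicit Arguments. Unset Strict Implicit. Unset Printing Implicit Defensive.

Section OMM.
Variables (M : finType) (one : M) (le : rel M) (mul : M -> M -> M)
          (om sh : M -> M).

Fixpoint pw (x : M) (n : nat) : M :=
  if n is n'.+1 then mul x (pw x n') else one.

Definition ev_pow (x : M) (k : int) (y : M) : Prop :=
  exists N : nat, forall n : nat, (N <= n)%N ->
    pw x `|((n`!)%:Z + k)%R|%N = y.

(* (M,1,<=,.,-^omega) is the presentation of an ordered finite ordinal monoid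
   (algebraic axiomatisation, cf. Bedon--Carton, in the ordered setting). *)
Record ordered_ordinal_monoid : Prop := {
  le_refl  : forall x, le x x;
  le_anti  : forall x y, le x y -> le y x -> x = y;
  le_trans : forall x y z, le x y -> le y z -> le x z;
  mulA     : forall x y z, mul x (mul y z) = mul (mul x y) z;
  mul1x    : forall x, mul one x = x;
  mulx1    : forall x, mul x one = x;
  om_shift : forall x y, om (mul x y) = mul x (om (mul y x));
  om_pow   : forall x n, (0 < n)%N -> om (pw x n) = om x;
  om_one   : om one = one;
  mul_mono : forall x x' y y', le x x' -> le y y' -> le (mul x y) (mul x' y');
  om_mono  : forall x y, le x y -> le (om x) (om y)
}.

Record ordinal_monoid_merge : Prop := {
  omm_base    : ordered_ordinal_monoid;
  sh_mono     : forall a b, le a b -> le (sh a) (sh b);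
  sh_ge_pow   : forall a (k : int) y, ev_pow a k y -> le y (sh a);
  sh_idem_pow : forall a y, ev_pow a 0 y -> sh y = y;
  sh_sq       : forall a, mul (sh a) (sh a) = sh a;
  sh_sh       : forall a, sh (sh a) = sh a;
  sh_mulC     : forall a b, sh (mul a b) = mul a (mul (sh (mul b a)) b)
}.

Definition closed_mul (B : {set M}) : bool :=
  [forall x, forall y, (x \in B) && (y \in B) ==> (mul x y \in B)].
Definition closed_fun (f : M -> M) (B : {set M}) : bool :=
  [forall x, (x \in B) ==> (f x \in B)].

Definition Cl_plus (A : {set M}) : {set M} :=
  \bigcap_(B : {set M} | (A \subset B) && closed_mul B && closed_fun sh B) B.

Definition Cl_ord (A : {set M}) : {set M} :=
  \bigcap_(B : {set M} | [&& A \subset B, closed_mul B, closed_fun sh B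
                           & closed_fun om B]) B.

Definition Cl_omega (A : {set M}) : {set M} :=
  [set mul a (om b) | a in Cl_plus A, b in Cl_plus A].

Definition lmul (a : M) (X : {set M}) : {set M} := [set mul a x | x in X].

End OMM.

(* Main.v *)
Require Import Defs.
From mathcomp Require Import all_boot all_order all_algebra.
From mathcomp Require Import zify.
From Stdlib Require Import Lia.
Set Implicit Arguments. Unset Strict Implicit. Unset Printing Implicit Defensive.

Lemma Cl_ord_sub (M : finType) (mul : M -> M -> M) (om sh : M -> M) (A : {set M}) :
  A \subset Cl_ord mul om sh A.
Proof.
apply/subsetP => x xA; apply/bigcapP => B /and4P [/subsetP H _ _ _]; exact: H.
Qed.

Lemma Cl_ord_min (M : finType) (mul : M -> M -> M) (om sh : M -> M) (A B : {set M}) :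
  A \subset B -> closed_mul mul B -> closed_fun sh B -> closed_fun om B ->
  Cl_ord mul om sh A \subset B.
Proof. by move=> H1 H2 H3 H4; apply: bigcap_inf; rewrite H1 H2 H3 H4. Qed.

Lemma Cl_ord_mul (M : finType) (mul : M -> M -> M) (om sh : M -> M) (A : {set M}) x y :
  x \in Cl_ord mul om sh A -> y \in Cl_ord mul om sh A -> mul x y \in Cl_ord mul om sh A.
Proof.
move=> /bigcapP Hx /bigcapP Hy; apply/bigcapP => B HB.
move: (HB) => /and4P [_ /forallP H _ _].
by move: (H x) => /forallP /(_ y) /implyP; apply; rewrite Hx // Hy.
Qed.

Lemma Cl_ord_sh (M : finType) (mul : M -> M -> M) (om sh : M -> M) (A : {set M}) x :
  x \in Cl_ord mul om sh A -> sh x \in Cl_ord mul om sh A.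
Proof.
move=> /bigcapP Hx; apply/bigcapP => B HB.
move: (HB) => /and4P [_ _ /forallP H _].
by move: (H x) => /implyP; apply; rewrite Hx.
Qed.

Lemma Cl_ord_om (M : finType) (mul : M -> M -> M) (om sh : M -> M) (A : {set M}) x :
  x \in Cl_ord mul om sh A -> om x \in Cl_ord mul om sh A.
Proof.
move=> /bigcapP Hx; apply/bigcapP => B HB.
move: (HB) => /and4P [_ _ _ /forallP H].
by move: (H x) => /implyP; apply; rewrite Hx.
Qed.

Lemma Cl_plus_sub_ord (M : finType) (mul : M -> M -> M) (om sh : M -> M) (A : {set M}) :
  Cl_plus mul sh A \subset Cl_ord mul om sh A.
Proof.
apply: bigcap_inf; rewrite Cl_ord_sub /=.
apply/andP; split; apply/forallP => x.
  apply/forallP => y; apply/implyP => /andP [hx hy]; exact: Cl_ord_mul.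
apply/implyP; exact: Cl_ord_sh.
Qed.

Lemma pwD (M : finType) (one : M) (mul : M -> M -> M)
  (mulA : forall x y z, mul x (mul y z) = mul (mul x y) z)
  (mul1x : forall x, mul one x = x) x m n :
  pw one mul x (m + n) = mul (pw one mul x m) (pw one mul x n).
Proof. elim: m => [|m IH] /=; first by rewrite mul1x. by rewrite IH mulA. Qed.

Lemma pw_idem (M : finType) (one : M) (mul : M -> M -> M)
  (mulA : forall x y z, mul x (mul y z) = mul (mul x y) z)
  (mul1x : forall x, mul one x = x) x :
  exists k, (0 < k)%N /\ mul (pw one mul x k) (pw one mul x k) = pw one mul x k.
Proof.
pose f (i : 'I_(#|M|.+1)) := pw one mul x i.
have [i [j [ij Heq]]] : exists i j : nat, (i < j)%N /\ pw one mul x i = pw one mul x j.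
  case: (pickP (fun p : 'I_(#|M|.+1) * 'I_(#|M|.+1) => (p.1 != p.2) && (f p.1 == f p.2))).
    move=> [a b] /= /andP [ab /eqP fab].
    case: (ltngtP a b) => h.
    - by exists a, b.
    - by exists b, a.
    - by move: ab; rewrite -val_eqE /= h eqxx.
  move=> H; exfalso.
  have Hinj : injective f.
    move=> a b fab; apply/eqP.
    by move: (H (a, b)) => /=; rewrite fab eqxx andbT => /negbFE.
  by move: (leq_card f Hinj); rewrite card_ord ltnn.
set p := j - i.
have Hp : (0 < p)%N by rewrite subn_gt0.
have Hper : forall m, pw one mul x (i + m * p) = pw one mul x i.
  elim=> [|m IH]; first by rewrite addn0.
  have -> : (i + m.+1 * p = m * p + j)%N by rewrite mulSn /p; lia.
  by rewrite pwD // -Heq -pwD // addnC.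
exists (i.+1 * p)%N; split; first by rewrite muln_gt0.
have Hk : forall k m, (i <= k)%N -> pw one mul x (k + m * p) = pw one mul x k.
  move=> k m ik.
  have -> : (k + m * p = (k - i) + (i + m * p))%N by lia.
  by rewrite pwD // Hper -pwD // subnK.
rewrite -pwD // Hk //.
rewrite mulSn; apply: leq_trans (leq_addl p _); by rewrite leq_pmulr.
Qed.

Theorem lemma5p10 (M : finType) (one : M) (le : rel M) (mul : M -> M -> M)
    (om sh : M -> M)
    (HM : ordinal_monoid_merge one le mul om sh) (A : {set M}) :
  (exists2 a, a \in A &
     lmul mul a (Cl_ord mul om sh A) \proper Cl_ord mul om sh A)
  \/ (Cl_ord mul om sh (Cl_omega mul om sh A) \proper Cl_ord mul om sh A)
  \/ (forall x y, x \in Cl_ord mul om sh A -> y \in Cl_ord mul om sh A ->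
        mul x y = y /\ om x = om y).
Proof.
case: HM => [[_ _ _ mulA mul1x mulx1 om_shift om_pow _ _ _] _ _ sh_idem _ _ sh_mulC].
set C := Cl_ord mul om sh A.
have omx : forall x, om x = mul x (om x).
  by move=> x; move: (om_shift x one); rewrite mulx1 mul1x.
have shx : forall x, sh x = mul x (sh x).
  by move=> x; move: (sh_mulC x one); rewrite mulx1 mul1x mulx1.
have CA : A \subset C by apply: Cl_ord_sub.
have lsub : forall x, x \in C -> lmul mul x C \subset C.
  move=> x xC; apply/subsetP => y /imsetP [c cC ->]; exact: Cl_ord_mul.
pose surj x := C \subset lmul mul x C.
have surjE : forall x c, surj x -> c \in C -> exists2 c', c' \in C & c = mul x c'.
  by move=> x c /subsetP H /H /imsetP.
have surj_l : forall n s, s \in C -> surj (mul n s) -> surj n.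
  move=> n s sC Hs; apply/subsetP => c cC.
  have [c' c'C ->] := surjE _ _ Hs cC.
  rewrite -mulA; apply/imsetP; exists (mul s c') => //; exact: Cl_ord_mul.
have surj_r : forall x n, x \in C -> n \in C -> surj (mul x n) -> surj n.
  move=> x n xC nC Hs.
  have e1 : lmul mul (mul x n) C = lmul mul x (lmul mul n C).
    rewrite /lmul -imset_comp; apply: eq_imset => c /=; by rewrite mulA.
  have Hc : (#|C| <= #|lmul mul n C|)%N.
    apply: leq_trans (subset_leq_card Hs) _; rewrite e1; exact: leq_imset_card.
  have : lmul mul n C == C by rewrite eqEcard lsub.
  by rewrite /surj => /eqP ->.
have surjM : forall x y, y \in C -> surj x -> surj y -> surj (mul x y).
  move=> x y yC Hx Hy; apply/subsetP => c cC.
  have [c1 c1C ->] := surjE _ _ Hx cC.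
  have [c2 c2C ->] := surjE _ _ Hy c1C.
  rewrite mulA; apply/imsetP; by exists c2.
have fixid : forall x u, surj u -> mul x u = u -> forall c, c \in C -> mul x c = c.
  move=> x u Hu Hxu c cC; have [c' c'C ->] := surjE _ _ Hu cC.
  by rewrite mulA Hxu.
have PC : Cl_plus mul sh A \subset C by apply: Cl_plus_sub_ord.
have OC : Cl_omega mul om sh A \subset C.
  apply/subsetP => w /imset2P [p q pP qP ->].
  apply: Cl_ord_mul; first by apply: (subsetP PC).
  by apply: Cl_ord_om; apply: (subsetP PC).
case: (boolP [exists a in A, lmul mul a C \proper C]).
  move=> /existsP [a /andP [aA Ha]]; left; by exists a.
move=> /existsPn H1.
have Hsurj : forall a, a \in A -> surj a.
  move=> a aA; move: (H1 a); rewrite aA /= properE lsub //=; last by apply: (subsetP CA).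
  by move/negbNE.
case: (boolP (Cl_ord mul om sh (Cl_omega mul om sh A) \proper C)).
  by move=> H; right; left.
rewrite properE negb_and negbK.
have -> : Cl_ord mul om sh (Cl_omega mul om sh A) \subset C.
  apply: Cl_ord_min => //.
  - apply/forallP => x; apply/forallP => y; apply/implyP => /andP [? ?]; exact: Cl_ord_mul.
  - apply/forallP => x; apply/implyP; exact: Cl_ord_sh.
  - apply/forallP => x; apply/implyP; exact: Cl_ord_om.
move=> /= H2; right; right.
case: (boolP [exists w in Cl_omega mul om sh A, surj w]); last first.
  move=> /existsPn Hn.
  pose N := [set c in C | ~~ surj c].
  have CN : C \subset N.
    apply: subset_trans H2 _; apply: Cl_ord_min.
    - apply/subsetP => w wO; rewrite inE (subsetP OC) //=.
      by move: (Hn w); rewrite wO.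
    - apply/forallP => x; apply/forallP => y; apply/implyP => /andP.
      rewrite !inE => [[/andP [xC _] /andP [yC ny]]].
      rewrite Cl_ord_mul //=; apply: contra ny; exact: surj_r.
    - apply/forallP => x; apply/implyP; rewrite !inE => /andP [xC nx].
      rewrite Cl_ord_sh //=; apply: contra nx; rewrite {1}shx.
      by apply: surj_l; apply: Cl_ord_sh.
    - apply/forallP => x; apply/implyP; rewrite !inE => /andP [xC nx].
      rewrite Cl_ord_om //=; apply: contra nx; rewrite {1}omx.
      by apply: surj_l; apply: Cl_ord_om.
  have A0 : A = set0.
    apply/setP => a; rewrite inE; apply/negP => aA.
    have := subsetP CN a (subsetP CA a aA); rewrite inE => /andP [_].
    by rewrite Hsurj.
  have C0 : C \subset set0.
    apply: Cl_ord_min; rewrite ?A0 ?sub0set //.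
    - by apply/forallP => x; apply/forallP => y; rewrite inE.
    - by apply/forallP => x; rewrite inE.
    - by apply/forallP => x; rewrite inE.
  by move=> x y /(subsetP C0); rewrite inE.
move=> /existsP [w /andP [wO Hw]].
move: (wO) => /imset2P [p q pP qP Ew].
have pC : p \in C by apply: (subsetP PC).
have qC : q \in C by apply: (subsetP PC).
have wqC : om q \in C by apply: Cl_ord_om.
have Hwq : surj (om q) by apply: (surj_r p) => //; rewrite -Ew.
have lq : forall c, c \in C -> mul q c = c by apply: (fixid _ (om q)) => //; rewrite -omx.
have pwC : forall t k, t \in C -> pw one mul t k.+1 \in C.
  move=> t k tC; elim: k => [|k IH] /=; first by rewrite mulx1.
  exact: Cl_ord_mul.
have pwS : forall t k, t \in C -> surj t -> surj (pw one mul t k.+1).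
  move=> t k tC st; elim: k => [|k IH]; first by rewrite /= mulx1.
  by apply: surjM => //; apply: pwC.
have key : forall t, t \in C -> surj t ->
    (forall c, c \in C -> mul t c = c) /\ om t = om q.
  move=> t tC st.
  have [k [k0 He]] := pw_idem mulA mul1x t.
  case: k k0 He => // k _ He.
  set e := pw one mul t k.+1 in He.
  have eC : e \in C by apply: pwC.
  have lde : forall c, c \in C -> mul e c = c.
    by apply: (fixid _ e) => //; apply: pwS.
  have Hom : om t = om q.
    rewrite -(om_pow t k.+1) // -/e.
    rewrite -(lde q qC) om_shift lde; last by apply: Cl_ord_om; apply: Cl_ord_mul.
    by rewrite lq.
  split => //; apply: (fixid _ (om q)) => //.
  by rewrite -Hom -omx.
pose T := [set c in C | surj c].
have CT : C \subset T.
  apply: Cl_ord_min.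
  - apply/subsetP => a aA; rewrite inE (subsetP CA) //=; exact: Hsurj.
  - apply/forallP => x; apply/forallP => y; apply/implyP => /andP.
    rewrite !inE => [[/andP [xC sx] /andP [yC sy]]].
    by rewrite Cl_ord_mul //=; apply: surjM.
  - apply/forallP => t; apply/implyP; rewrite !inE => /andP [tC st].
    have [lt _] := key t tC st.
    have -> : sh t = t.
      apply: (sh_idem t); exists 0%N => n _.
      rewrite GRing.addr0 absz_nat.
      have : (0 < n`!)%N by apply: fact_gt0.
      case: (n`!) => // m _; elim: m => [|m IH]; first by rewrite /= mulx1.
      by change (mul t (pw one mul t m.+1) = t); rewrite IH lt.
    by rewrite tC.
  - apply/forallP => t; apply/implyP; rewrite !inE => /andP [tC st].
    have [_ ->] := key t tC st.
    by rewrite wqC.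
move=> x y xC yC.
have := subsetP CT x xC; rewrite inE => /andP [_ sx].
have := subsetP CT y yC; rewrite inE => /andP [_ sy].
have [lx ox] := key x xC sx; have [_ oy] := key y yC sy.
by split; [apply: lx | rewrite ox oy].
Qed.
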